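(* Let $V^{2n}$ be a real vector space with $J\in\mathrm{Aut}(V)$, $J^2=-I$, and a positive definite inner product $(\,,\,)$ for which $J$ is an isometry. Let $\mathbb{L}^p$, $p\geq 2$, be a real vector space with a Lorentzian inner product $\langle\,,\,\rangle$, let $\alpha\colon V^{2n}\times V^{2n}\to\mathbb{L}^p$ be a symmetric bilinear form, and suppose there is a light-like vector $w\in\mathbb{L}^p$ with $\langle\alpha(X,Y),w\rangle=-(X,Y)$ for all $X,Y\in V^{2n}$. Let $\beta\colon V^{2n}\times V^{2n}\to W^{p,p}$ be the associated form (see context), assume $\beta$ is flat and that $\mathcal{S}(\beta)$ is degenerate, and let $v\in U_0^s$ be a light-like vector with $\mathcal{S}(\beta)\cap\mathcal{S}(\beta)^\perp=\mathrm{span}\{v\}\oplus\mathrm{span}\{v\}$. Then $L=\mathrm{span}\{v,w\}\subset\mathbb{L}^p$ is a Lorentzian plane. Moreover, normalizing $v$ so that $\langle v,w\rangle=-1$ and setting $\beta_1=\pi_{L^\perp\times L^\perp}\circ\beta$, we have $$\beta(X,Y)=\beta_1(X,Y)+2\big((X,Y)v,(X,JY)v\big)\quad\text{for all }X,Y\in V^{2n}.$$ Furthermore, if $s\leq n$ then $\dim\mathcal{N}(\beta_1)\geq 2n-2s+2$.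
   Context: $W^{p,p}=\mathbb{L}^p\oplus\mathbb{L}^p$ carries the inner product $\langle\!\langle(\xi,\bar\xi),(\eta,\bar\eta)\rangle\!\rangle=\langle\xi,\eta\rangle-\langle\bar\xi,\bar\eta\rangle$. The associated form is $\beta(X,Y)=(\alpha(X,Y)+\alpha(JX,JY),\ \alpha(X,JY)-\alpha(JX,Y))$. $\beta$ is flat if $\langle\!\langle\beta(X,Y),\beta(Z,T)\rangle\!\rangle-\langle\!\langle\beta(X,T),\beta(Z,Y)\rangle\!\rangle=0$ for all $X,Y,Z,T$. $\mathcal{S}(\beta)=\mathrm{span}\{\beta(X,Y):X,Y\in V\}$; a subspace $S$ of $W^{p,p}$ is degenerate if $S\cap S^\perp\neq 0$ ($\perp$ w.r.t. $\langle\!\langle\,,\,\rangle\!\rangle$). $U_0^s=\pi_1(\mathcal{S}(\beta))\subset\mathbb{L}^p$ is the projection of $\mathcal{S}(\beta)$ onto the first factor and $s=\dim U_0^s$ (it is known that $\mathcal S(\beta)=U_0^s\oplus U_0^s$ and that, when $\mathcal S(\beta)$ is degenerate, a light-like $v$ as in the claim exists). $\pi_{L^\perp\times L^\perp}$ is the orthogonal projection of $W^{p,p}$ onto $L^\perp\oplus L^\perp$ (componentwise orthogonal projection onto $L^\perp\subset\mathbb{L}^p$). For a bilinear form $\theta$, $\mathcal{N}(\theta)=\{Y:\theta(X,Y)=0\ \forall X\}$ is its right kernel. *)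

(* Defs.v *)
From HB Require Import structures.
From mathcomp Require Import all_boot all_order all_algebra.
From mathcomp Require Import reals.
Set Implicit Arguments. Unset Strict Implicit. Unset Printing Implicit Defensive.
Import Order.TTheory GRing.Theory Num.Theory.
Local Open Scope ring_scope.

(* Vectors are ROW vectors; a linear map given by a matrix A acts as x |-> x *m A. *)

Definition bform (R : realType) (m : nat) (B : 'M[R]_m) (x y : 'rV[R]_m) : R :=
  (x *m B *m y^T) 0 0.

Definition pos_def (R : realType) (m : nat) (B : 'M[R]_m) : Prop :=
  B^T = B /\ forall x : 'rV[R]_m, x != 0 -> 0 < bform B x x.

(* The symmetric form B is Lorentzian (signature (-,+,...,+)) on the
   subspace given by the predicate P: there is a time-like t in P whose
   orthogonal complement in P is positive definite. *)
Definition lorentzian_on (R : realType) (m : nat) (B : 'M[R]_m)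
    (P : 'rV[R]_m -> Prop) : Prop :=
  exists t, P t /\ bform B t t < 0 /\
    forall x, P x -> bform B x t = 0 -> x != 0 -> 0 < bform B x x.

Definition lorentzian (R : realType) (m : nat) (B : 'M[R]_m) : Prop :=
  B^T = B /\ lorentzian_on B (fun _ => True).

Definition light_like (R : realType) (m : nat) (B : 'M[R]_m) (x : 'rV[R]_m) :=
  x != 0 /\ bform B x x = 0.

Definition span2 (R : realType) (m : nat) (u v : 'rV[R]_m) (x : 'rV[R]_m) : Prop :=
  exists a b : R, x = a *: u + b *: v.

Definition lorentzian_plane (R : realType) (m : nat) (B : 'M[R]_m)
    (u v : 'rV[R]_m) : Prop :=
  free [:: u; v] /\ lorentzian_on B (span2 u v).

Definition dim_ge (R : realType) (m : nat) (P : 'rV[R]_m -> Prop) (k : nat) : Prop :=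
  exists X : seq 'rV[R]_m, size X = k /\ (forall x, x \in X -> P x) /\ free X.

Definition has_dim (R : realType) (m : nat) (P : 'rV[R]_m -> Prop) (k : nat) : Prop :=
  dim_ge P k /\ ~ dim_ge P k.+1.

(* W^{p,p} = L^p (+) L^p and its inner product <<,>> *)
Definition Wip (R : realType) (p : nat) (M : 'M[R]_p)
    (x y : 'rV[R]_p * 'rV[R]_p) : R :=
  bform M x.1 y.1 - bform M x.2 y.2.

Definition beta (R : realType) (m p : nat) (J : 'M[R]_m)
    (alpha : 'rV[R]_m -> 'rV[R]_m -> 'rV[R]_p) (X Y : 'rV[R]_m)
    : 'rV[R]_p * 'rV[R]_p :=
  (alpha X Y + alpha (X *m J) (Y *m J), alpha X (Y *m J) - alpha (X *m J) Y).

Definition flat (R : realType) (m p : nat) (M : 'M[R]_p)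
    (b : 'rV[R]_m -> 'rV[R]_m -> 'rV[R]_p * 'rV[R]_p) : Prop :=
  forall X Y Z T, Wip M (b X Y) (b Z T) - Wip M (b X T) (b Z Y) = 0.

Definition inS (R : realType) (m p : nat)
    (b : 'rV[R]_m -> 'rV[R]_m -> 'rV[R]_p * 'rV[R]_p)
    (z : 'rV[R]_p * 'rV[R]_p) : Prop :=
  exists (k : nat) (c : 'I_k -> R) (X Y : 'I_k -> 'rV[R]_m),
    z = \sum_(i < k) c i *: b (X i) (Y i).

Definition inSperp (R : realType) (m p : nat) (M : 'M[R]_p)
    (b : 'rV[R]_m -> 'rV[R]_m -> 'rV[R]_p * 'rV[R]_p)
    (z : 'rV[R]_p * 'rV[R]_p) : Prop :=
  forall u, inS b u -> Wip M z u = 0.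

Definition degenerate (R : realType) (m p : nat) (M : 'M[R]_p)
    (b : 'rV[R]_m -> 'rV[R]_m -> 'rV[R]_p * 'rV[R]_p) : Prop :=
  exists z, z != 0 /\ inS b z /\ inSperp M b z.

(* U_0^s = pi_1(S(b)) *)
Definition inU0 (R : realType) (m p : nat)
    (b : 'rV[R]_m -> 'rV[R]_m -> 'rV[R]_p * 'rV[R]_p) (x : 'rV[R]_p) : Prop :=
  exists y, inS b (x, y).

Definition is_orth_proj_perp (R : realType) (p : nat) (M : 'M[R]_p)
    (u v : 'rV[R]_p) (pi : 'rV[R]_p -> 'rV[R]_p) : Prop :=
  forall x, (forall l, span2 u v l -> bform M (pi x) l = 0) /\ span2 u v (x - pi x).

Definition right_kernel (R : realType) (m p : nat)
    (theta : 'rV[R]_m -> 'rV[R]_m -> 'rV[R]_p * 'rV[R]_p) (Y : 'rV[R]_m) : Prop :=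
  forall X, theta X Y = 0.

(* Main.v *)
Require Import Defs.
From HB Require Import structures.
From mathcomp Require Import all_boot all_order all_algebra.
From mathcomp Require Import reals.
From mathcomp Require Import ring lra zify.
From Stdlib Require Import Classical.
Import Order.TTheory GRing.Theory Num.Theory.
Local Open Scope ring_scope.
Section BForm.
Variables (R : realType) (m : nat) (B : 'M[R]_m).

Lemma bformDl x y z : bform B (x + y) z = bform B x z + bform B y z.
Proof. by rewrite /bform !mulmxDl mxE. Qed.
Lemma bformZl a x z : bform B (a *: x) z = a * bform B x z.
Proof. by rewrite /bform -!scalemxAl mxE. Qed.
Lemma bformDr x y z : bform B z (x + y) = bform B z x + bform B z y.
Proof. by rewrite /bform linearD /= mulmxDr mxE. Qed.
Lemma bformZr a x z : bform B z (a *: x) = a * bform B z x.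
Proof. by rewrite /bform linearZ /= -scalemxAr mxE. Qed.
Lemma bformNl x z : bform B (- x) z = - bform B x z.
Proof. by rewrite -scaleN1r bformZl mulN1r. Qed.
Lemma bformNr x z : bform B z (- x) = - bform B z x.
Proof. by rewrite -scaleN1r bformZr mulN1r. Qed.
Lemma bform0l z : bform B 0 z = 0.
Proof. by rewrite -(scale0r 0) bformZl mul0r. Qed.
Lemma bform0r z : bform B z 0 = 0.
Proof. by rewrite -(scale0r 0) bformZr mul0r. Qed.
Lemma bformC x y : B^T = B -> bform B x y = bform B y x.
Proof.
move=> HB; rewrite /bform.
have tr1 : forall A : 'M[R]_1, A 0 0 = (A^T) 0 0 by move=> A; rewrite mxE.
rewrite tr1.
by rewrite !trmx_mul trmxK HB mulmxA.
Qed.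
End BForm.

Ltac bexp := rewrite ?(bformDl, bformDr, bformZl, bformZr, bformNl, bformNr, bform0l, bform0r).

Section Lor.
Variables (R : realType) (m : nat) (B : 'M[R]_m).
Hypothesis HL : lorentzian B.

Lemma bsym x y : bform B x y = bform B y x.
Proof. by apply: bformC; case: HL. Qed.

Lemma lor_null_orth v w : light_like B v -> light_like B w -> bform B v w = 0 ->
  exists c, v = c *: w.
Proof.
case: HL => _ [t [_ [Ht Hpos]]] [vn0 vv] [wn0 ww] vw.
set a := bform B v t; set b := bform B w t.
have an0 : a != 0.
  apply/eqP => a0; have := Hpos v I a0 vn0; by rewrite vv ltxx.
have bn0 : b != 0.
  apply/eqP => b0; have := Hpos w I b0 wn0; by rewrite ww ltxx.
have u0 : b *: v - a *: w = 0.
  apply/eqP; apply/negPn/negP => un0.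
  have ut : bform B (b *: v - a *: w) t = 0 by bexp; rewrite -/a -/b; ring.
  have := Hpos _ I ut un0.
  have -> : bform B (b *: v - a *: w) (b *: v - a *: w) = 0.
    bexp; rewrite vv ww vw (bsym w v) vw; ring.
  by rewrite ltxx.
exists (a / b); apply: (scalerI bn0).
by rewrite scalerA mulrC divfK //; apply/eqP; rewrite -subr_eq0 u0.
Qed.

Lemma lor_spacelike u x : bform B u u < 0 -> bform B x u = 0 -> x != 0 ->
  0 < bform B x x.
Proof.
case: HL => _ [t [_ [Ht Hpos]]] uu xu xn0.
rewrite ltNge; apply/negP => xx.
set a := bform B x t; set b := bform B u t.
have yt : bform B (a *: u - b *: x) t = 0 by bexp; rewrite -/a -/b; ring.
have yy : bform B (a *: u - b *: x) (a *: u - b *: x) <= 0.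
  bexp; rewrite (bsym u x) xu.
  have h1 : a * a * bform B u u <= 0 by rewrite -mulrA; nra.
  nra.
have y0 : a *: u - b *: x = 0.
  apply/eqP; apply/negPn/negP => yn0.
  by have := Hpos _ I yt yn0; rewrite ltNge yy.
have a0 : a = 0.
  have : bform B (a *: u - b *: x) u = 0 by rewrite y0 bform0l.
  bexp; rewrite xu mulr0 subr0 => /eqP; rewrite mulf_eq0 => /orP [/eqP //|/eqP h].
  by move: uu; rewrite h ltxx.
have b0 : b = 0.
  move: y0; rewrite a0 scale0r sub0r => /eqP; rewrite oppr_eq0 scaler_eq0.
  by case/orP => [/eqP|] //; rewrite (negbTE xn0).
have un0 : u != 0 by apply/eqP => u0; move: uu; rewrite u0 bform0l ltxx.
by have := Hpos u I b0 un0; rewrite ltNge (ltW uu).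
Qed.
End Lor.
Section LinAlg.
Variable R : realType.



Lemma rv_sq0 l (r : 'rV[R]_l) : (r *m r^T) 0 0 = 0 -> r = 0.
Proof.
rewrite mxE => h; apply/matrixP => i j; rewrite ord1 mxE.
have h1 : forall k : 'I_l, true -> 0 <= r 0 k * r^T k 0.
  by move=> k _; rewrite mxE -expr2 sqr_ge0.
have := @psumr_eq0P _ _ _ _ h1 h j isT.
by rewrite mxE => /eqP; rewrite mulf_eq0 orbb => /eqP.
Qed.

Lemma gram_unit k l (A : 'M[R]_(k, l)) : row_free A -> A *m A^T \in unitmx.
Proof.
move=> fA; rewrite -row_free_unit; apply/inj_row_free => z hz.
apply: (row_free_inj fA); rewrite mul0mx; apply: rv_sq0.
by rewrite trmx_mul mulmxA -(mulmxA z) hz mul0mx mxE.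
Qed.

Arguments gram_unit {k l A}.

Lemma gram_free k l (A : 'M[R]_(k, l)) : A *m A^T \in unitmx -> row_free A.
Proof.
rewrite -row_free_unit => fA; apply/inj_row_free => z hz.
by apply: (row_free_inj fA); rewrite mulmxA hz !mul0mx.
Qed.

Arguments gram_free {k l A}.

Lemma exists_nonroot (q : {poly R}) : q != 0 -> exists t : R, t != 0 /\ q.[t] != 0.
Proof.
move=> q0.
set rs := [seq (i.+1)%:R : R | i <- iota 0 (size q)].
have urs : uniq rs.
  rewrite map_inj_uniq ?iota_uniq // => i j /eqP; rewrite eqr_nat eqSS => /eqP //.
have : ~~ all (root q) rs.
  apply/negP => al; have := max_poly_roots q0 al urs.
  by rewrite size_map size_iota ltnn.
case/allPn => t /mapP [i _ ->] nr; exists (i.+1)%:R; split => //.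
by rewrite pnatr_eq0.
Qed.

Lemma mapXE a b (A B : 'M[R]_(a, b)) t :
  map_mx (horner_eval t) (\matrix_(i, j) ((A i j)%:P + 'X * (B i j)%:P)) = A + t *: B.
Proof.
apply/matrixP => i j; rewrite !mxE /=. by rewrite horner_evalE hornerD hornerM hornerX !hornerC mulrC.
Qed.

Lemma regular k l (A0 A1 : 'M[R]_(k, l)) (y : 'rV[R]_k) :
  (forall t : R, (\rank (A0 + t *: A1)%R <= \rank A0)%N) -> y *m A0 = 0 ->
  (y *m A1 <= A0)%MS.
Proof.
move=> Hmax yA0; apply/negPn/negP => nu.
set u := y *m A1.
set rho := \rank A0.
have : (row_base A0 <= A0)%MS by rewrite eq_row_base.
case/submxP => D HD.
set U := fun t : R => col_mx (D *m (A0 + t *: A1)) u.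
have U0free : row_free (U 0).
  apply/inj_row_free => z; rewrite -[z]hsubmxK mul_row_col scale0r addr0 -HD.
  set z1 := lsubmx z; set z2 := rsubmx z => hz.
  have z20 : z2 = 0.
    apply/eqP; apply/negPn/negP => nz2.
    have e2 : z2 0 0 != 0.
      apply: contra nz2 => /eqP e; apply/eqP/matrixP => i j.
      by rewrite !ord1 e mxE.
    have e3 : z2 *m u = z2 0 0 *: u by rewrite {1}[z2]mx11_scalar mul_scalar_mx.
    rewrite e3 in hz; move/eqP: hz; rewrite addrC addr_eq0 => /eqP h.
    apply: (negP nu); apply/submxP; exists (- (z2 0 0)^-1 *: (z1 *m D)).
    by rewrite -scalemxAl -mulmxA -HD scaleNr -scalerN -h scalerA mulVf // scale1r.
  move: hz; rewrite z20 mul0mx addr0 => hz.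
  have z10 : z1 = 0 by apply: (row_free_inj (row_base_free A0)); rewrite hz mul0mx.
  by rewrite z10 row_mx0.
set U1 := col_mx (D *m A1) (0 : 'M_(1, l)).
have UE : forall t, U t = U 0 + t *: U1.
  move=> t; rewrite /U /U1 scale0r addr0 scale_col_mx add_col_mx scaler0 addr0.
  by rewrite mulmxDr scalemxAr.
set Up : 'M[{poly R}]_(rho + 1, l) :=
  \matrix_(i, j) ((U 0 i j)%:P + 'X * (U1 i j)%:P).
have UpE : forall t, map_mx (horner_eval t) Up = U t.
  move=> t; rewrite UE; apply/matrixP => i j.
  by rewrite mapXE.
set q := \det (Up *m Up^T).
have qE : forall t, q.[t] = \det (U t *m (U t)^T).
  move=> t; rewrite -UpE map_trmx -map_mxM det_map_mx /=.
  by rewrite horner_evalE.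
have q0 : q != 0.
  apply/negP => /eqP e.
  have := gram_unit U0free; rewrite unitmxE -qE e horner0.
  by rewrite unitr0.
case: (exists_nonroot _ q0) => t [t0 qt].
have Ufree : row_free (U t).
  by apply: gram_free; rewrite unitmxE unitfE -qE.
have Usub : (U t <= (A0 + t *: A1)%R)%MS.
  rewrite col_mx_sub; apply/andP; split; first (apply/submxP; by exists D). apply/submxP; exists (t^-1 *: y).
  rewrite -scalemxAl mulmxDr yA0 add0r -scalemxAr scalerA mulVf // scale1r //.
have := mxrankS Usub; move/eqP: Ufree => ->.
have := Hmax t => h1 h2.
have := leq_trans h2 h1.
by rewrite addn1 ltnn.
Qed.

Lemma lin_mxE k l (f : 'rV[R]_k -> 'rV[R]_l) :
  (forall a x y, f (a *: x + y) = a *: f x + f y) ->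
  forall x, f x = x *m \matrix_(i < k) f (delta_mx 0 i).
Proof.
move=> hf x.
have f0 : f 0 = 0.
  have h := hf 1 0 0; rewrite !scale1r addr0 in h.
  by apply: (@addrI _ (f 0)); rewrite addr0 -h.
rewrite mulmx_sum_row {1}(row_sum_delta x).
elim/big_rec2: _ => [//|i y1 y2 _ <-].
by rewrite hf rowK.
Qed.

Lemma rank_row_mx_le k l1 l2 (A : 'M[R]_(k, l1)) (B : 'M[R]_(k, l2)) :
  (\rank (row_mx A B) <= \rank A + \rank B)%N.
Proof.
have -> : row_mx A B = (A *m row_mx 1%:M 0 + B *m row_mx 0 1%:M)%R.
  by rewrite !mul_mx_row !mulmx1 !mulmx0 add_row_mx addr0 add0r.
apply: leq_trans (mxrankS (addmx_sub_adds (submx_refl _) (submx_refl _))) _.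
apply: leq_trans (mxrank_adds_leqif _ _) _.
by apply: leq_add; apply: mxrankM_maxl.
Qed.

Lemma free_rows r l (B : 'M[R]_(r, l)) : row_free B ->
  free [tuple row i B | i < r].
Proof.
move=> fB; apply/freeP => k hk i.
have : (\row_j k j) *m B = 0.
  rewrite mulmx_sum_row -[RHS]hk; apply: eq_bigr => j _.
  by rewrite mxE -tnth_nth tnth_mktuple.
move=> h; have := row_free_inj fB (etrans h (esym (mul0mx _ B))).
by move/rowP/(_ i); rewrite !mxE.
Qed.
End LinAlg.
Arguments lin_mxE {R k l f}.
Arguments regular {R k l A0 A1 y}.
Arguments free_rows {R r l B}.
Arguments exists_nonroot {R q}.

Lemma exists_max (P : nat -> Prop) b k0 : (forall k, P k -> (k <= b)%N) -> P k0 ->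
  exists m, P m /\ forall k, P k -> (k <= m)%N.
Proof.
move=> hb.
have : forall d m, (b - m <= d)%N -> P m -> exists m, P m /\ forall k, P k -> (k <= m)%N.
  elim=> [|d IH] m hd Pm.
    exists m; split => // k Pk; have := hb k Pk; move: hd; lia.
  case: (classic (exists k, P k /\ (m < k)%N)) => [[k [Pk mk]]|hn].
    apply: (IH k) => //; have := hb k Pk; move: hd mk; lia.
  exists m; split => // k Pk; case: (ltnP m k) => // mk; case: hn; by exists k.
by move=> h; apply: (h b k0) => //; rewrite leq_subr.
Qed.

Section Main.
Variables (R : realType) (n p : nat) (G J : 'M[R]_(2 * n)) (M : 'M[R]_p)
  (alpha : 'rV[R]_(2 * n) -> 'rV[R]_(2 * n) -> 'rV[R]_p) (w v : 'rV[R]_p).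
Hypotheses (HJ : J *m J = - 1%:M) (HG : pos_def G)
  (HGJ : forall X Y, bform G (X *m J) (Y *m J) = bform G X Y)
  (HM : lorentzian M)
  (Hlin : forall (a : R) X Y Z, alpha (a *: X + Y) Z = a *: alpha X Z + alpha Y Z)
  (Hsym : forall X Y, alpha X Y = alpha Y X)
  (Hw : light_like M w)
  (Haw : forall X Y, bform M (alpha X Y) w = - bform G X Y)
  (Hflat : flat M (beta J alpha))
  (Hdeg : degenerate M (beta J alpha))
  (Hv : light_like M v)
  (HS : forall z, (inS (beta J alpha) z /\ inSperp M (beta J alpha) z) <->
             exists a b : R, z = (a *: v, b *: v)).

Local Notation be := (beta J alpha).

Lemma alpha0l Z : alpha 0 Z = 0.
Proof.
have h := Hlin 1 0 0 Z; rewrite !scale1r addr0 in h.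
by apply: (@addrI _ (alpha 0 Z)); rewrite addr0 -h.
Qed.
Lemma alphaZl a X Z : alpha (a *: X) Z = a *: alpha X Z.
Proof. by have := Hlin a X 0 Z; rewrite addr0 alpha0l addr0. Qed.
Lemma alphaDl X Y Z : alpha (X + Y) Z = alpha X Z + alpha Y Z.
Proof. by have := Hlin 1 X Y Z; rewrite !scale1r. Qed.
Lemma alphaNl X Z : alpha (- X) Z = - alpha X Z.
Proof. by rewrite -scaleN1r alphaZl scaleN1r. Qed.
Lemma alpha0r Z : alpha Z 0 = 0.
Proof. by rewrite Hsym alpha0l. Qed.
Lemma alphaZr a X Z : alpha Z (a *: X) = a *: alpha Z X.
Proof. by rewrite Hsym alphaZl Hsym. Qed.
Lemma alphaDr X Y Z : alpha Z (X + Y) = alpha Z X + alpha Z Y.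
Proof. by rewrite Hsym alphaDl !(Hsym Z). Qed.
Lemma alphaNr X Z : alpha Z (- X) = - alpha Z X.
Proof. by rewrite Hsym alphaNl Hsym. Qed.

Lemma JJ (X : 'rV[R]_(2 * n)) : X *m J *m J = - X.
Proof. by rewrite -mulmxA HJ mulmxN mulmx1. Qed.

Lemma GJ (X Y : 'rV[R]_(2 * n)) : bform G (X *m J) Y = - bform G X (Y *m J).
Proof. by rewrite -HGJ JJ bformNl. Qed.

Lemma Gsym X Y : bform G X Y = bform G Y X.
Proof. by apply: bformC; case: HG. Qed.

Lemma Msym x y : bform M x y = bform M y x.
Proof. exact: bsym. Qed.

Lemma inS_be X Y : inS be (be X Y).
Proof.
exists 1%N, (fun _ => 1), (fun _ => X), (fun _ => Y).
by rewrite big_ord1 scale1r.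
Qed.

Lemma perp_v1 X Y : bform M v (be X Y).1 = 0.
Proof.
have hz : exists a b : R, (v, 0) = (a *: v, b *: v) by exists 1, 0; rewrite scale1r scale0r.
have [_ hp] := proj2 (HS _) hz.
by have := hp _ (inS_be X Y); rewrite /Wip /= bform0l subr0.
Qed.

Lemma perp_v2 X Y : bform M v (be X Y).2 = 0.
Proof.
have hz : exists a b : R, (0, v) = (a *: v, b *: v) by exists 0, 1; rewrite scale1r scale0r.
have [_ hp] := proj2 (HS _) hz.
by have := hp _ (inS_be X Y); rewrite /Wip /= bform0l sub0r => /eqP; rewrite oppr_eq0 => /eqP.
Qed.

Lemma aw1 X Y : bform M (be X Y).1 w = - (2 * bform G X Y).
Proof. by rewrite /= bformDl !Haw HGJ; ring. Qed.

Lemma aw2 X Y : bform M (be X Y).2 w = - (2 * bform G X (Y *m J)).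
Proof. by rewrite /= bformDl bformNl !Haw GJ; ring. Qed.

Lemma be00 : be 0 0 = 0.
Proof. by rewrite /beta !mul0mx !alpha0l addr0 subr0. Qed.

Lemma exX : exists X : 'rV[R]_(2 * n), X != 0.
Proof.
apply: NNPP => hn.
have all0 : forall X : 'rV[R]_(2 * n), X = 0.
  move=> X; apply: NNPP => h; apply: hn; exists X; exact/eqP.
case: Hdeg => z [zn0 [[k [c [X [Y ez]]]] _]].
move: zn0; rewrite ez big1 ?eqxx // => i _.
by rewrite (all0 (X i)) (all0 (Y i)) be00 scaler0.
Qed.

Definition kvw := bform M v w.

Lemma kvw_neq0 : kvw != 0.
Proof.
apply/eqP => k0.
have [c vc] := @lor_null_orth _ _ _ HM _ _ Hv Hw k0.
have [X Xn0] := exX.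
have := perp_v1 X X; rewrite vc bformZl Msym aw1 => /eqP.
rewrite mulf_eq0 oppr_eq0 mulf_eq0 pnatr_eq0 /= => /orP [/eqP c0|].
  by case: Hv => /negP vn0 _; apply: vn0; rewrite vc c0 scale0r.
case: HG => _ /(_ X Xn0) h; by rewrite gt_eqF.
Qed.

Lemma part1 : lorentzian_plane M v w.
Proof.
have kn0 := kvw_neq0.
split.
  rewrite free_cons span_seq1 seq1_free; apply/andP; split; last by case: Hw.
  apply/negP => /vlineP [c vc]; move: kn0; rewrite /kvw vc bformZl.
  by case: Hw => _ ->; rewrite mulr0 eqxx.
set k := kvw.
exists (v - k *: w); split; first by exists 1, (- k); rewrite scale1r scaleNr.
split.
  have ek : bform M v w = k by [].
  bexp; rewrite (Msym w v) ek.
  case: Hv => _ ->; case: Hw => _ ->.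
  have kk : 0 < k * k by rewrite lt_def mulf_neq0 //= -expr2 sqr_ge0.
  nra.
have ek : bform M v w = k by [].
move=> x [a [b ->]]; bexp; rewrite (Msym w v) ek.
case: Hv => _ ->; case: Hw => _ -> => hx xn0.
have ha : a != 0.
  apply: contra xn0 => /eqP a0; move: hx; rewrite a0; rewrite !(mul0r, mulr0, add0r, addr0, subr0, sub0r).
  rewrite oppr0 mulr0 addr0 => /eqP; rewrite mulf_eq0 (negbTE kn0) orbF => /eqP b0.
  by rewrite b0 !scale0r addr0.
have hb : b = a * k.
  have : k * (b - a * k) = 0 by rewrite -hx; ring.
  move/eqP; rewrite mulf_eq0 (negbTE kn0) /= subr_eq0 => /eqP //.
rewrite hb.
have kk : 0 < k * k by rewrite lt_def mulf_neq0 //= -expr2 sqr_ge0.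
have aa : 0 < a * a by rewrite lt_def mulf_neq0 //= -expr2 sqr_ge0.
nra.
Qed.

Variable pi : 'rV[R]_p -> 'rV[R]_p.
Hypothesis Hpi : is_orth_proj_perp M v w pi.

Lemma span_v : span2 v w v.
Proof. by exists 1, 0; rewrite scale1r scale0r addr0. Qed.
Lemma span_w : span2 v w w.
Proof. by exists 0, 1; rewrite scale1r scale0r add0r. Qed.

Lemma pi_v x : bform M (pi x) v = 0.
Proof. exact: (proj1 (Hpi x) _ span_v). Qed.
Lemma pi_w x : bform M (pi x) w = 0.
Proof. exact: (proj1 (Hpi x) _ span_w). Qed.

Lemma decomp c (hc : bform M (c *: v) w = -1) x (hx : bform M x v = 0) :
  x = pi x + (- bform M x w) *: (c *: v).
Proof.
have [_ [a [b hab]]] := Hpi x.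
have kn0 := kvw_neq0.
have ek : bform M v w = kvw by [].
have h1 := congr1 (fun z => bform M z v) hab; move: h1 => /=.
bexp; rewrite hx pi_v (Msym w v) ek; case: Hv => _ ->.
rewrite subr0 mulr0 add0r => /esym/eqP; rewrite mulf_eq0 (negbTE kn0) orbF => /eqP b0.
have h2 := congr1 (fun z => bform M z w) hab; move: h2 => /=.
bexp; rewrite pi_w ek b0; case: Hw => _ ->; rewrite subr0 mulr0 addr0 => h2.
move: hc; rewrite bformZl ek => hc.
have -> : - bform M x w *: (c *: v) = x - pi x.
  by rewrite hab b0 scale0r addr0 scalerA h2; congr (_ *: _); rewrite mulNr -mulrA (mulrC kvw) hc mulrN1 opprK.
by rewrite addrC subrK.
Qed.

Lemma part2 c : bform M (c *: v) w = -1 -> forall X Y,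
  be X Y = (pi (be X Y).1 + (2 * bform G X Y) *: (c *: v),
            pi (be X Y).2 + (2 * bform G X (Y *m J)) *: (c *: v)).
Proof.
move=> hc X Y; rewrite [LHS]surjective_pairing; congr pair.
  by rewrite {1}(@decomp c hc (be X Y).1) ?aw1 ?opprK // Msym perp_v1.
by rewrite {1}(@decomp c hc (be X Y).2) ?aw2 ?opprK // Msym perp_v2.
Qed.


Lemma L_unique d : bform M d v = 0 -> bform M d w = 0 -> span2 v w d -> d = 0.
Proof.
move=> dv dw [a [b ed]]; move: dv dw; rewrite ed; bexp.
have kn0 := kvw_neq0; have ek : bform M v w = kvw by [].
rewrite (Msym w v) ek; case: Hv => _ ->; case: Hw => _ ->.
rewrite !mulr0 add0r addr0 => /eqP; rewrite mulf_eq0 (negbTE kn0) orbF => /eqP ->.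
move/eqP; rewrite mulf_eq0 (negbTE kn0) orbF => /eqP ->.
by rewrite !scale0r addr0.
Qed.

Lemma pi_lin a x y : pi (a *: x + y) = a *: pi x + pi y.
Proof.
apply/eqP; rewrite -subr_eq0; apply/eqP; apply: L_unique.
- by bexp; rewrite !pi_v; ring.
- by bexp; rewrite !pi_w; ring.
have [_ [a1 [b1 e1]]] := Hpi x.
have [_ [a2 [b2 e2]]] := Hpi y.
have [_ [a3 [b3 e3]]] := Hpi (a *: x + y).
exists (a * a1 + a2 - a3), (a * b1 + b2 - b3).
apply/rowP => j; move/rowP: e1 => /(_ j); move/rowP: e2 => /(_ j).
move/rowP: e3 => /(_ j); rewrite !mxE => e3 e2 e1.
have -> : pi (a *: x + y) 0 j = a * x 0 j + y 0 j - (a3 * v 0 j + b3 * w 0 j) by rewrite -e3; ring.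
have -> : pi x 0 j = x 0 j - (a1 * v 0 j + b1 * w 0 j) by rewrite -e1; ring.
have -> : pi y 0 j = y 0 j - (a2 * v 0 j + b2 * w 0 j) by rewrite -e2; ring.
ring.
Qed.

Lemma pi0 : pi 0 = 0.
Proof.
have h := pi_lin 1 0 0; rewrite !scale1r addr0 in h.
by apply: (@addrI _ (pi 0)); rewrite addr0 -h.
Qed.

Lemma piN x : pi (- x) = - pi x.
Proof. by have := pi_lin (-1) x 0; rewrite addr0 pi0 addr0 !scaleN1r. Qed.

Lemma tt_neg : bform M (v - kvw *: w) (v - kvw *: w) < 0.
Proof.
have kn0 := kvw_neq0; have ek : bform M v w = kvw by [].
bexp; rewrite (Msym w v) ek.
case: Hv => _ ->; case: Hw => _ ->.
have kk : 0 < kvw * kvw by rewrite lt_def mulf_neq0 //= -expr2 sqr_ge0.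
nra.
Qed.

Lemma perp_pos y : bform M y v = 0 -> bform M y w = 0 -> y != 0 -> 0 < bform M y y.
Proof.
move=> yv yw; apply: (@lor_spacelike _ _ _ HM (v - kvw *: w)); first exact: tt_neg.
by bexp; rewrite yv yw; ring.
Qed.

Lemma pi_ge0 x : 0 <= bform M (pi x) (pi x).
Proof.
case: (eqVneq (pi x) 0) => [->|h]; first by rewrite bform0l.
by apply: ltW; apply: perp_pos => //; [apply: pi_v | apply: pi_w].
Qed.

Lemma pi_eq0 x : bform M (pi x) (pi x) = 0 -> pi x = 0.
Proof.
move=> h; apply/eqP; apply/negPn/negP => nz.
by have := @perp_pos (pi x) (pi_v x) (pi_w x) nz; rewrite h ltxx.
Qed.

Definition c0 := - kvw^-1.
Lemma hc0 : bform M (c0 *: v) w = -1.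
Proof. by rewrite bformZl /c0 mulNr mulVf ?kvw_neq0. Qed.

Lemma bform_pi x x' : bform M x v = 0 -> bform M x' v = 0 ->
  bform M (pi x) (pi x') = bform M x x'.
Proof.
move=> hx hx'.
have e := @decomp c0 hc0 x hx; have e' := @decomp c0 hc0 x' hx'.
rewrite [in RHS]e [in RHS]e'; bexp.
rewrite !pi_v (Msym v (pi x')) pi_v; case: Hv => _ ->; ring.
Qed.

Definition b1 X Y := (pi (be X Y).1, pi (be X Y).2).

Lemma Wip_b1 X Y Z T : Wip M (b1 X Y) (b1 Z T) = Wip M (be X Y) (be Z T).
Proof.
by rewrite /Wip /= !bform_pi // (Msym _ v) ?perp_v1 ?perp_v2.
Qed.

Lemma flat1 X Y Z T : Wip M (b1 X Y) (b1 Z T) - Wip M (b1 X T) (b1 Z Y) = 0.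
Proof. by rewrite !Wip_b1; apply: Hflat. Qed.


Lemma be1_linr a X Y Y' : (be X (a *: Y + Y')).1 = a *: (be X Y).1 + (be X Y').1.
Proof. by rewrite /= mulmxDl -scalemxAl !alphaDr !alphaZr scalerDr addrACA. Qed.
Lemma be2_linr a X Y Y' : (be X (a *: Y + Y')).2 = a *: (be X Y).2 + (be X Y').2.
Proof. by rewrite /= mulmxDl -scalemxAl !alphaDr !alphaZr scalerBr opprD addrACA. Qed.
Lemma be1_linl a X X' Y : (be (a *: X + X') Y).1 = a *: (be X Y).1 + (be X' Y).1.
Proof. by rewrite /= mulmxDl -scalemxAl !alphaDl !alphaZl scalerDr addrACA. Qed.
Lemma be2_linl a X X' Y : (be (a *: X + X') Y).2 = a *: (be X Y).2 + (be X' Y).2.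
Proof. by rewrite /= mulmxDl -scalemxAl !alphaDl !alphaZl scalerBr opprD addrACA. Qed.

Lemma beT1 X Y : (be Y X).1 = (be X Y).1.
Proof. by rewrite /= Hsym (Hsym (Y *m J)). Qed.
Lemma beT2 X Y : (be Y X).2 = - (be X Y).2.
Proof. by rewrite /= opprB Hsym (Hsym (Y *m J)). Qed.
Lemma be_diag2 Y : (be Y Y).2 = 0.
Proof. by rewrite /= Hsym subrr. Qed.
Lemma be2_as1 X Y : (be X Y).2 = (be X (Y *m J)).1.
Proof. by rewrite /= JJ alphaNr. Qed.

Lemma b1_1 X Y : (b1 X Y).1 = pi (be X Y).1. Proof. by []. Qed.
Lemma b1_2 X Y : (b1 X Y).2 = pi (be X Y).2. Proof. by []. Qed.

Lemma fst0 : (0 : 'rV[R]_p * 'rV[R]_p).1 = 0. Proof. by []. Qed.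
Lemma snd0 : (0 : 'rV[R]_p * 'rV[R]_p).2 = 0. Proof. by []. Qed.

Definition F X Y : 'rV[R]_(p + p) := row_mx (b1 X Y).1 (b1 X Y).2.

Lemma F_linr X a Y Y' : F X (a *: Y + Y') = a *: F X Y + F X Y'.
Proof. by rewrite /F !b1_1 !b1_2 be1_linr be2_linr !pi_lin scale_row_mx add_row_mx. Qed.
Lemma F_linl Y a X X' : F (a *: X + X') Y = a *: F X Y + F X' Y.
Proof. by rewrite /F !b1_1 !b1_2 be1_linl be2_linl !pi_lin scale_row_mx add_row_mx. Qed.

Definition A X : 'M[R]_(2 * n, p + p) := \matrix_(i < 2 * n) F X (delta_mx 0 i).

Lemma FE X Y : F X Y = Y *m A X.
Proof. exact: (lin_mxE (F_linr X)). Qed.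

Lemma A_lin a X X' : A (a *: X + X') = a *: A X + A X'.
Proof.
apply/row_matrixP => i; rewrite !linearD !linearZ /= !rowK; exact: F_linl.
Qed.

Lemma F_eq0 X Y : F X Y = 0 -> b1 X Y = 0.
Proof.
rewrite /F -row_mx0 => /eq_row_mx [h1 h2].
by rewrite [b1 X Y]surjective_pairing h1 h2.
Qed.

Lemma F_inj X Y X' Y' : F X Y = F X' Y' -> b1 X Y = b1 X' Y'.
Proof.
rewrite /F => /eq_row_mx [h1 h2].
by rewrite [b1 X Y]surjective_pairing h1 h2 -surjective_pairing.
Qed.

Lemma ker_right X0 y : (forall X, (\rank (A X) <= \rank (A X0))%N) ->
  y *m A X0 = 0 -> right_kernel b1 y.
Proof.
move=> Hmax yA.
have b0 : b1 X0 y = 0 by apply: F_eq0; rewrite FE.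
have reg : forall X, (y *m A X <= A X0)%MS.
  move=> X; apply: regular yA => t.
  by rewrite -[X in (_ <= \rank X)%N]/(A X0) addrC -A_lin.
have orth : forall X T, Wip M (b1 X y) (b1 X0 T) = 0.
  move=> X T; have := flat1 X y X0 T; rewrite b0.
  by rewrite /Wip !fst0 !snd0 !bform0r subrr subr0.
have yy : b1 y y = 0.
  have [D hD] := submxP (reg y).
  have e : b1 y y = b1 X0 D by apply: F_inj; rewrite !FE.
  have : Wip M (b1 y y) (b1 y y) = 0 by rewrite {2}e orth.
  rewrite /Wip !b1_1 !b1_2 be_diag2 pi0 bform0r subr0 => /pi_eq0 h.
  by rewrite [b1 y y]surjective_pairing !b1_1 !b1_2 h be_diag2 pi0.
have main : forall T, b1 y T = 0.
  move=> T; have := flat1 y y T T; rewrite yy.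
  rewrite /Wip !b1_1 !b1_2 !fst0 !snd0 !bform0l subrr sub0r beT1 beT2 piN bformNl opprK => /eqP.
  rewrite oppr_eq0 => /eqP h.
  have h1 := pi_ge0 (be T y).1; have h2 := pi_ge0 (be T y).2.
  have e1 : bform M (pi (be T y).1) (pi (be T y).1) = 0 by lra.
  have e2 : bform M (pi (be T y).2) (pi (be T y).2) = 0 by lra.
  by rewrite [b1 y T]surjective_pairing !b1_1 !b1_2 beT1 beT2 piN (pi_eq0 _ e1) (pi_eq0 _ e2) oppr0.
move=> X; have := main X.
rewrite /b1 => /pair_equal_spec [h1 h2].
by rewrite beT1 beT2 piN h1 h2 oppr0.
Qed.


Hypothesis HU : inU0 be v.

Definition Pm : 'M[R]_p := \matrix_(i < p) pi (delta_mx 0 i).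
Lemma piE x : pi x = x *m Pm.
Proof. exact: (lin_mxE pi_lin). Qed.

Lemma pi_v0 : pi v = 0.
Proof.
apply: L_unique; [exact: pi_v | exact: pi_w |].
have [_ [a [b e]]] := Hpi v.
exists (1 - a), (- b).
apply/rowP => j; move/rowP: e => /(_ j); rewrite !mxE => e.
have -> : pi v 0 j = v 0 j - (a * v 0 j + b * w 0 j) by rewrite -e; ring.
ring.
Qed.

Lemma inU0_1 X Y : inU0 be (be X Y).1.
Proof. by exists (be X Y).2; rewrite -surjective_pairing; apply: inS_be. Qed.

Lemma part3 s : has_dim (inU0 be) s -> (s <= n)%N ->
  dim_ge (right_kernel b1) (2 * n - 2 * s + 2).
Proof.
move=> [[Xs [sXs [inXs fXs]]] nmax] sn.
set Umx : 'M[R]_(size Xs, p) := \matrix_(i < size Xs) Xs`_i.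
have inU0_sub : forall x, inU0 be x -> (x <= Umx)%MS.
  move=> x hx.
  have xin : x \in <<Xs>>%VS.
    apply/negPn/negP => nx; apply: nmax; exists (x :: Xs); split; first by rewrite /= sXs.
    split; last by rewrite free_cons nx fXs.
    by move=> y; rewrite inE => /orP [/eqP -> //| /inXs].
  have ex := @coord_span _ _ _ (in_tuple Xs) _ xin.
  apply/submxP; exists (\row_i coord (in_tuple Xs) i x).
  by rewrite mulmx_sum_row {1}ex; apply: eq_bigr => i _; rewrite mxE rowK.
have rankUP : (\rank (Umx *m Pm) < s)%N.
  have h := mxrank_mul_ker Umx Pm.
  have hv : (v <= Umx :&: kermx Pm)%MS.
    rewrite sub_capmx inU0_sub //=; apply/sub_kermxP; by rewrite -piE pi_v0.
  have := mxrankS hv; rewrite rank_rV; case: Hv => -> _ /= h1.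
  have h2 := rank_leq_row Umx.
  by rewrite -sXs; apply: leq_trans h2; rewrite -h -addn1 leq_add2l.
have hb : forall k, (exists X, \rank (A X) = k) -> (k <= 2 * n)%N.
  by move=> k [X <-]; exact: rank_leq_row.
have [m0 [[X0 hX0] Hm0]] := @exists_max (fun k => exists X, \rank (A X) = k) (2 * n) (\rank (A 0)) hb (ex_intro _ 0 erefl).
have Hmax : forall X, (\rank (A X) <= \rank (A X0))%N.
  by move=> X; rewrite hX0; apply: Hm0; exists X.
have rUP : (\rank (Umx *m Pm) <= s.-1)%N by rewrite -ltnS prednK // (leq_ltn_trans _ rankUP).
have rA : (\rank (A X0) <= s.-1 + s.-1)%N.
  set Fa : 'M_(2 * n, p) := \matrix_(i < 2 * n) (be X0 (delta_mx 0 i)).1.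
  set Fb : 'M_(2 * n, p) := \matrix_(i < 2 * n) (be X0 (delta_mx 0 i)).2.
  have eA : A X0 = row_mx (Fa *m Pm) (Fb *m Pm).
    apply/row_matrixP => i; rewrite rowK row_row_mx !row_mul !rowK /F b1_1 b1_2 !piE //.
  have hFa : (Fa <= Umx)%MS.
    by apply/row_subP => i; rewrite rowK; apply: inU0_sub; apply: inU0_1.
  have hFb : (Fb <= Umx)%MS.
    by apply/row_subP => i; rewrite rowK be2_as1; apply: inU0_sub; apply: inU0_1.
  have ra := mxrankS (submxMr Pm hFa); have rb := mxrankS (submxMr Pm hFb).
  rewrite eA; apply: leq_trans (@rank_row_mx_le _ _ _ _ _ _) _.
  by apply: leq_add; apply: leq_trans rUP.
set B := row_base (kermx (A X0)).
have rB : \rank (kermx (A X0)) = (2 * n - \rank (A X0))%N := mxrank_ker _.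
set d := (2 * n - 2 * s + 2)%N.
have dle : (d <= \rank (kermx (A X0)))%N.
  rewrite rB /d.
  have s1 : (0 < s)%N by apply: leq_ltn_trans rankUP.
  move: rA; case: (\rank (A X0)) => r; move: s1 sn; rewrite /=; lia.
exists (take d [tuple row i B | i < \rank (kermx (A X0))]).
split; first by rewrite size_takel // size_tuple.
split.
  move=> y /mem_take /tnthP [i ->]; rewrite tnth_mktuple.
  apply: (@ker_right X0 _ Hmax); apply/sub_kermxP; apply: submx_trans (row_sub i B) _.
  by rewrite /B eq_row_base.
apply: (@catl_free _ _ (drop d [tuple row i B | i < \rank (kermx (A X0))])).
rewrite cat_take_drop; exact: free_rows (row_base_free _).
Qed.
End Main.

Theorem proposition5 (R : realType) (n p : nat)
    (G J : 'M[R]_(2 * n)) (M : 'M[R]_p)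
    (alpha : 'rV[R]_(2 * n) -> 'rV[R]_(2 * n) -> 'rV[R]_p)
    (w v : 'rV[R]_p) :
  (* V^{2n}: J^2 = -I, positive definite inner product, J an isometry *)
  J *m J = - 1%:M ->
  pos_def G ->
  (forall X Y, bform G (X *m J) (Y *m J) = bform G X Y) ->
  (* L^p, p >= 2, Lorentzian *)
  (2 <= p)%N ->
  lorentzian M ->
  (* alpha symmetric bilinear *)
  (forall (a : R) X Y Z, alpha (a *: X + Y) Z = a *: alpha X Z + alpha Y Z) ->
  (forall X Y, alpha X Y = alpha Y X) ->
  (* light-like w *)
  light_like M w ->
  (forall X Y, bform M (alpha X Y) w = - bform G X Y) ->
  (* beta flat, S(beta) degenerate *)
  flat M (beta J alpha) ->
  degenerate M (beta J alpha) ->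
  (* v light-like in U_0^s with S cap S^perp = span{v} (+) span{v} *)
  inU0 (beta J alpha) v ->
  light_like M v ->
  (forall z, (inS (beta J alpha) z /\ inSperp M (beta J alpha) z) <->
             exists a b : R, z = (a *: v, b *: v)) ->
  lorentzian_plane M v w /\
  forall pi : 'rV[R]_p -> 'rV[R]_p, is_orth_proj_perp M v w pi ->
    let beta1 := fun X Y => (pi (beta J alpha X Y).1, pi (beta J alpha X Y).2) in
    (forall c : R, bform M (c *: v) w = -1 ->
       forall X Y,
         beta J alpha X Y =
         ((beta1 X Y).1 + (2 * bform G X Y) *: (c *: v),
          (beta1 X Y).2 + (2 * bform G X (Y *m J)) *: (c *: v))) /\
    (forall s : nat, has_dim (inU0 (beta J alpha)) s -> (s <= n)%N ->
       dim_ge (right_kernel beta1) (2 * n - 2 * s + 2)).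
Proof.
move=> HJ HG HGJ Hp HM Hlin Hsym Hw Haw Hflat Hdeg HU Hv HS.
split; first exact: (@part1 R n p G J M alpha w v HG HGJ HM Hlin Hw Haw Hdeg Hv HS).
move=> pi Hpi beta1; split.
  move=> c hc X Y.
  exact: (@part2 R n p G J M alpha w v HJ HG HGJ HM Hlin Hw Haw Hdeg Hv HS pi Hpi c hc X Y).
move=> s hs sn.
exact: (@part3 R n p G J M alpha w v HJ HG HGJ HM Hlin Hsym Hw Haw Hflat Hdeg Hv HS pi Hpi HU s hs sn).
Qed.
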